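(* In every BZ algebra, and in every BCC algebra, property (Ex) holds if and only if property (BB) holds.
   Context: Let $(A,\to,1)$ be an algebra of type $(2,0)$. Properties, required for all $x,y,z\in A$: (Re) $x\to x=1$; (M) $1\to x=x$; (L) $x\to 1=1$; (B) $(y\to z)\to((x\to y)\to(x\to z))=1$; (An) $x\to y=1$ and $y\to x=1$ imply $x=y$; (Ex) $x\to(y\to z)=y\to(x\to z)$; (BB) $(y\to z)\to((z\to x)\to(y\to x))=1$. A BZ algebra is an algebra satisfying (Re), (M), (B), (An). A BCC algebra is an algebra satisfying (Re), (M), (L), (B), (An). *)

(* Defs.v *)
Definition prop_Re {A : Type} (imp : A -> A -> A) (one : A) : Prop :=
  forall x, imp x x = one.
Definition prop_M {A : Type} (imp : A -> A -> A) (one : A) : Prop :=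
  forall x, imp one x = x.
Definition prop_L {A : Type} (imp : A -> A -> A) (one : A) : Prop :=
  forall x, imp x one = one.
Definition prop_B {A : Type} (imp : A -> A -> A) (one : A) : Prop :=
  forall x y z, imp (imp y z) (imp (imp x y) (imp x z)) = one.
Definition prop_An {A : Type} (imp : A -> A -> A) (one : A) : Prop :=
  forall x y, imp x y = one -> imp y x = one -> x = y.
Definition prop_Ex {A : Type} (imp : A -> A -> A) : Prop :=
  forall x y z, imp x (imp y z) = imp y (imp x z).
Definition prop_BB {A : Type} (imp : A -> A -> A) (one : A) : Prop :=
  forall x y z, imp (imp y z) (imp (imp z x) (imp y x)) = one.

Definition is_BZ_algebra {A : Type} (imp : A -> A -> A) (one : A) : Prop :=
  prop_Re imp one /\ prop_M imp one /\ prop_B imp one /\ prop_An imp one.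
Definition is_BCC_algebra {A : Type} (imp : A -> A -> A) (one : A) : Prop :=
  prop_Re imp one /\ prop_M imp one /\ prop_L imp one /\ prop_B imp one /\ prop_An imp one.

(* Main.v *)
Require Import Defs.

Lemma bz_main (A : Type) (imp : A -> A -> A) (one : A) :
  is_BZ_algebra imp one -> (prop_Ex imp <-> prop_BB imp one).
Proof.
  intros [Re [M [B An]]]. split.
  - intros Ex x y z. rewrite Ex. apply B.
  - intros BB.
    assert (P : forall z x, imp z (imp (imp z x) x) = one).
    { intros z x. pose proof (BB x one z) as H. rewrite !M in H. exact H. }
    assert (T : forall a b c, imp a b = one -> imp b c = one -> imp a c = one).
    { intros a b c H1 H2. pose proof (BB c a b) as H. rewrite H1, H2, !M in H. exact H. }
    assert (K : forall x y z, imp (imp x (imp y z)) (imp y (imp x z)) = one).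
    { intros x y z. apply T with (imp (imp (imp y z) z) (imp x z)).
      - apply BB.
      - pose proof (BB (imp x z) y (imp (imp y z) z)) as H.
        rewrite P, M in H. exact H. }
    intros x y z. apply An; apply K.
Qed.

Theorem corollary2p5 :
  (forall (A : Type) (imp : A -> A -> A) (one : A),
      is_BZ_algebra imp one -> (prop_Ex imp <-> prop_BB imp one)) /\
  (forall (A : Type) (imp : A -> A -> A) (one : A),
      is_BCC_algebra imp one -> (prop_Ex imp <-> prop_BB imp one)).
Proof.
  split.
  - exact bz_main.
  - intros A imp one [Re [M [L [B An]]]]. apply bz_main.
    repeat split; assumption.
Qed.
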